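(* Let $n\in\mathbb{N}$, let $G=D_n=\langle\sigma,\varrho\mid\sigma^2=e=\varrho^n,\ \sigma\varrho\sigma^{-1}=\varrho^{-1}\rangle$, let $A=\mathbb{C}[[z]]$, and let $\phi:G\to\Aut_{\mathbb{R}}(A)$ be the action given by $\phi_\sigma(\alpha)=\bar\alpha$ for $\alpha\in\mathbb{C}$, $\phi_\sigma(z)=z$, $\phi_\varrho(\alpha)=\alpha$ for $\alpha\in\mathbb{C}$, $\phi_\varrho(z)=\xi z$ with $\xi=\exp(2\pi i/n)$. Then there is an isomorphism of $\mathbb{R}$-algebras $A[G,\phi]\cong M_2(H_n(O))$, where $O=\mathbb{R}[[z^n]]$.
   Context: $A[G,\phi]$ is the skew group ring: the free left $A$-module with basis $\{[g]\}_{g\in G}$ and multiplication $a[f]\cdot b[g]=a\,\phi_f(b)[fg]$. For the complete DVR $O=\mathbb{R}[[z^n]]$, $H_n(O)$ is the ring of $n\times n$ matrices with entries in $O$ on and below the diagonal and in $z^nO$ above the diagonal. *)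

(* Defs.v *)
From HB Require Import structures.
From mathcomp Require Import all_boot all_order all_algebra all_fingroup.
From mathcomp Require Import reals trigo.
From mathcomp Require Import complex.

Set Implicit Arguments.
Unset Strict Implicit.
Unset Printing Implicit Defensive.

Import Order.TTheory GRing.Theory Num.Theory.
Local Open Scope ring_scope.

(* Formal power series K[[t]] over a ring K, as coefficient sequences.      *)
Definition ps (K : Type) := nat -> K.

Definition ps_add {K : pzRingType} (f g : ps K) : ps K := fun m => f m + g m.
Definition ps_zero {K : pzRingType} : ps K := fun _ => 0.
Definition ps_one {K : pzRingType} : ps K := fun m => if m == 0%N then 1 else 0.
Definition ps_mul {K : pzRingType} (f g : ps K) : ps K :=
  fun m => \sum_(l < m.+1) f l * g (m - l)%N.
Definition ps_const {K : pzRingType} (c : K) : ps K :=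
  fun m => if m == 0%N then c else 0.

Definition xi (R : realType) (n : nat) : R[i] :=
  Complex (cos (2 * pi / n%:R)) (sin (2 * pi / n%:R)).

Definition phi_sigma (R : realType) (f : ps R[i]) : ps R[i] :=
  fun j => conjc (f j).
Definition phi_rho (R : realType) (n : nat) (f : ps R[i]) : ps R[i] :=
  fun j => (xi R n) ^+ j * f j.

(* Skew group ring A[G, phi]: elements are functions x : gT -> A supported  *)
(* in G (x = sum_g x(g) [g]); a[f] * b[g] = a phi_f(b) [fg].                 *)
Section SkewGroupRing.
Variables (gT : finGroupType) (G : {group gT}) (K : pzRingType).
Variable phi : gT -> ps K -> ps K.

Definition skew_mem (x : gT -> ps K) : Prop := forall g, g \notin G -> x g = ps_zero.
Definition skew_add (x y : gT -> ps K) : gT -> ps K := fun g => ps_add (x g) (y g).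
Definition skew_one : gT -> ps K := fun g => if g == 1%g then ps_one else ps_zero.
Definition skew_mul (x y : gT -> ps K) : gT -> ps K :=
  fun h => if h \in G then
     (fun m => \sum_(f in G) ps_mul (x f) (phi f (y (f^-1 * h)%g)) m)
   else ps_zero.
Definition skew_scale (c : K) (x : gT -> ps K) : gT -> ps K :=
  fun g => ps_mul (ps_const c) (x g).
End SkewGroupRing.

(* M_2(H_n(O)), O = R[[z^n]].  An element of O is written as the sequence    *)
(* of its coefficients w.r.t. t = z^n.  An element of M_2(H_n(O)) is a 2x2   *)
(* matrix of n x n matrices over O, stored as M I J i j : ps R (block (I,J), *)
(* entry (i,j)); entries strictly above the diagonal of each block lie in    *)
(* z^n O, i.e. have zero constant term.                                      *)
Section M2Hn.
Variables (R : pzRingType) (n : nat).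

Definition M2mat := 'I_2 -> 'I_2 -> 'I_n -> 'I_n -> ps R.

Definition M2Hn_mem (M : M2mat) : Prop :=
  forall I J (i j : 'I_n), (i < j)%N -> M I J i j 0%N = 0.

Definition M2_add (M N : M2mat) : M2mat :=
  fun I J i j => ps_add (M I J i j) (N I J i j).
Definition M2_one : M2mat :=
  fun I J i j => if (I == J) && (i == j) then ps_one else ps_zero.
Definition M2_mul (M N : M2mat) : M2mat :=
  fun I K i k m => \sum_(J < 2) \sum_(j < n) ps_mul (M I J i j) (N J K j k) m.
Definition M2_scale (c : R) (M : M2mat) : M2mat :=
  fun I J i j => ps_mul (ps_const c) (M I J i j).
End M2Hn.

(* Main.v *)
Require Import Defs.
From HB Require Import structures.
From mathcomp Require Import all_boot all_order all_algebra all_fingroup.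
From mathcomp Require Import reals trigo.
From mathcomp Require Import complex.
From mathcomp Require Import zify ring lra.
From Stdlib Require Import FunctionalExtensionality.
Import Order.TTheory GRing.Theory Num.Theory.
Local Open Scope ring_scope.
Local Open Scope complex_scope.

Lemma mulcE (R : rcfType) (a b c d : R) :
  (a +i* b) * (c +i* d) = (a * c - b * d) +i* (a * d + b * c) :> R[i].
Proof. by []. Qed.

Lemma xiX (R : realType) (n k : nat) :
  xi R n ^+ k = (cos (k%:R * (2 * pi / n%:R))) +i* (sin (k%:R * (2 * pi / n%:R))).
Proof.
elim: k => [|k IH]; first by rewrite expr0 mul0r cos0 sin0.
rewrite exprS IH /xi mulcE -[k.+1]addn1 natrD.
set t := (_ / n%:R).
rewrite (mulrDl k%:R 1 t) mul1r cosD sinD.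
congr (_ +i* _); ring.
Qed.

Lemma xin1 (R : realType) (n : nat) : (0 < n)%N -> xi R n ^+ n = 1.
Proof.
move=> n0; rewrite xiX.
have -> : n%:R * (2 * pi / n%:R) = pi *+ 2 :> R.
  have nz : n%:R != 0 :> R by rewrite pnatr_eq0 -lt0n.
  rewrite mulr2n; field; exact: nz.
by rewrite cos2pi sin2pi.
Qed.

Lemma xi_neq1 (R : realType) (n k : nat) : (0 < k < n)%N -> xi R n ^+ k != 1.
Proof.
case/andP=> k0 kn; rewrite xiX; apply/eqP=> [][] hc _.
set x := k%:R * (2 * pi / n%:R) in hc.
have n0 : (0 < n)%N by apply: ltn_trans kn.
have x0 : 0 < x.
  by rewrite /x mulr_gt0 ?ltr0n // divr_gt0 ?ltr0n // mulr_gt0 // pi_gt0.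
have x2 : x < pi *+ 2.
  rewrite /x mulrA ltr_pdivrMr ?ltr0n // -mulr_natr mulrC mulr_natr.
  have -> : pi *+ 2 * n%:R = (2 * pi) * n%:R :> R by ring.
  by rewrite ltr_pM2l ?ltr_nat // mulr_gt0 // pi_gt0.
have pi0 := @pi_gt0 R.
case: (lerP x pi) => hx.
  have : cos x < cos 0.
    rewrite ltr_cos // ?in_itv /= ?lexx ?(ltW x0) ?hx ?(ltW pi0) //.
  by rewrite hc cos0 ltxx.
have : cos (pi *+ 2 - x) < cos 0.
  rewrite ltr_cos // ?in_itv /= ?lexx ?(ltW pi0) //.
  - by rewrite subr_gt0.
  - by apply/andP; split; [rewrite subr_ge0; exact: ltW| rewrite mulr2n; lra].
have -> : cos (pi *+ 2 - x) = cos x.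
  by rewrite -cosN opprB -{2}(subrK (pi *+ 2) x) cosD2pi.
by rewrite hc cos0 ltxx.
Qed.

Lemma xi_neq0 (R : realType) (n : nat) : (0 < n)%N -> xi R n != 0.
Proof.
move=> n0; apply/negP=> /eqP h; have := xin1 R n n0.
by rewrite h expr0n (gtn_eqF n0) /= => /eqP; rewrite eq_sym oner_eq0.


Qed.

Lemma xi_inj (R : realType) (n k k' : nat) : (k < n)%N -> (k' < n)%N ->
  xi R n ^+ k = xi R n ^+ k' -> k = k'.
Proof.
wlog le : k k' / (k' <= k)%N.
  move=> H kn kn' e; case: (leqP k' k) => h; first exact: H.
  by apply/esym/H => //; apply: ltnW.
move=> kn kn' e; have n0 : (0 < n)%N by apply: leq_ltn_trans kn.
case: (ltngtP k' k) => [lt|gt|->] //; last by exfalso; lia.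
exfalso.

have : xi R n ^+ (k - k') != 1 by apply: xi_neq1; rewrite subn_gt0 lt /=; lia.
rewrite -(subnK le) exprD in e.
have nz : xi R n ^+ k' != 0 by rewrite expf_neq0 // xi_neq0.
move: e; rewrite -{2}[xi R n ^+ k']mul1r => /(mulIf nz) ->.
by rewrite eqxx.
Qed.

Lemma orth (R : realType) (n k k' : nat) : (k < n)%N -> (k' < n)%N ->
  \sum_(j < n) xi R n ^+ (j * k) * (xi R n)^-1 ^+ (j * k') =
  (k == k')%:R * n%:R.
Proof.
move=> kn kn'; have n0 : (0 < n)%N by apply: leq_ltn_trans kn.
set z := xi R n ^+ k * (xi R n)^-1 ^+ k'.
have E : forall j : 'I_n, xi R n ^+ (j * k) * (xi R n)^-1 ^+ (j * k') = z ^+ j.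
  by move=> j; rewrite exprMn !(mulnC j) !exprM.
rewrite (eq_bigr _ (fun j _ => E j)).
have nz := xi_neq0 R n n0.
case: (eqVneq k k') => [e|ne].
  have -> : z = 1 by rewrite /z -e exprVn mulfV // expf_neq0.

  by rewrite (eq_bigr (fun _ => 1)) ?sumr_const ?card_ord ?mul1r // => j _; rewrite expr1n.
rewrite mul0r.
have zn : z ^+ n = 1.
  rewrite /z exprMn exprVn -!exprM !(mulnC _ n) !exprM (xin1 R n n0) !expr1n.
  by rewrite mul1r -exprVn -exprM mulnC exprM exprVn (xin1 R n n0) invr1 expr1n.


have z1 : z != 1.
  apply/negP=> /eqP h; apply: (negP ne); apply/eqP;
 apply: (xi_inj R n k k' kn kn').

  by move: h; rewrite /z exprVn => /divr1_eq.
have := subrX1 z n; rewrite zn subrr => /esym/eqP; rewrite mulf_eq0 subr_eq0 (negbTE z1) /=.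
by move/eqP.
Qed.

Lemma dft1 (R : realType) (n : nat) (b : 'I_n -> R[i]) (k0 : 'I_n) :
  \sum_(j < n) (xi R n)^-1 ^+ (j * k0) * \sum_(k < n) xi R n ^+ (j * k) * b k =
  n%:R * b k0.
Proof.
under eq_bigr do rewrite mulr_sumr.
rewrite exchange_big /=.
have inner : forall k : 'I_n, \sum_(j < n) (xi R n)^-1 ^+ (j * k0) * (xi R n ^+ (j * k) * b k)
    = (k == k0)%:R * n%:R * b k.
  move=> k; under eq_bigr do rewrite mulrCA mulrA.
  by rewrite -mulr_suml orth.
rewrite (eq_bigr _ (fun k _ => inner k)) (bigD1 k0) //= big1 ?addr0.
  by rewrite eqxx mul1r.
by move=> k nk; rewrite (negbTE nk) !mul0r.
Qed.

Lemma dft2 (R : realType) (n : nat) (c : 'I_n -> R[i]) (j0 : 'I_n) :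
  \sum_(k < n) xi R n ^+ (j0 * k) * \sum_(j < n) (xi R n)^-1 ^+ (j * k) * c j =
  n%:R * c j0.
Proof.
under eq_bigr do rewrite mulr_sumr.
rewrite exchange_big /=.
have inner : forall j : 'I_n, \sum_(k < n) xi R n ^+ (j0 * k) * ((xi R n)^-1 ^+ (j * k) * c j)
    = (j0 == j)%:R * n%:R * c j.
  move=> j; under eq_bigr do rewrite mulrA (mulnC j0) (mulnC j).
  by rewrite -mulr_suml orth.
rewrite (eq_bigr _ (fun k _ => inner k)) (bigD1 j0) //= big1 ?addr0.
  by rewrite eqxx mul1r.
by move=> k nk; rewrite eq_sym (negbTE nk) !mul0r.
Qed.

Definition ci (R : rcfType) : R[i] := Complex 0 1.
Arguments ci {R}.
Lemma cji (R : rcfType) : (@ci R)^* = - ci.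
Proof. by apply/eqP; rewrite eq_complex /= oppr0 !eqxx. Qed.

Definition cj (R : rcfType) (e : bool) (c : R[i]) : R[i] := if e then c^* else c.
Definition iu (R : rcfType) (J : 'I_2) : R[i] := if J == ord0 then 1 else ci.
Definition compI (R : rcfType) (I : 'I_2) (c : R[i]) : R := if I == ord0 then complex.Re c else complex.Im c.

Arguments compI {R}.
Arguments cj {R}.

Lemma ii (R : rcfType) : ci * ci = -1 :> R[i].
Proof. by rewrite -expr2 sqr_i. Qed.

Lemma big2 (V : zmodType) (F : 'I_2 -> V) : \sum_(J < 2) F J = F ord0 + F (lift ord0 ord0).
Proof. by rewrite big_ord_recl big_ord_recl big_ord0 addr0. Qed.

Lemma compI_iu (R : rcfType) I J : compI I (iu R J) = (I == J)%:R.
Proof. by case: I => [[|[|]]] //= ?; case: J => [[|[|]]] //= ?. Qed.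

Lemma compI_add (R : rcfType) I (a b : R[i]) : compI I (a + b) = compI I a + compI I b.
Proof. by rewrite /compI; case: (I == ord0); [apply: raddfD|apply: raddfD]. Qed.

Lemma compI_scale (R : rcfType) I (r : R) (a : R[i]) : compI I (r%:C * a) = r * compI I a.
Proof. by case: a => a b; rewrite /compI; case: (I == ord0) => /=; ring. Qed.

Lemma compI0 (R : rcfType) I : compI I (0 : R[i]) = 0.
Proof. by rewrite /compI; case: (I == ord0). Qed.

Lemma compI_sum (R : rcfType) I (T : Type) (r : seq T) (P : pred T) (F : T -> R[i]) :
  compI I (\sum_(t <- r | P t) F t) = \sum_(t <- r | P t) compI I (F t).
Proof.
elim: r => [|t r IH]; first by rewrite !big_nil compI0.
by rewrite !big_cons; case: (P t); rewrite ?compI_add IH.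
Qed.

Lemma compI_ext (R : rcfType) (a b : R[i]) :
  (forall I, compI I a = compI I b) -> a = b.
Proof.
case: a => a1 a2; case: b => b1 b2 h.
by have := h ord0; have := h (lift ord0 ord0); rewrite /compI /= => -> ->.
Qed.

Lemma decomp (R : rcfType) (c : R[i]) : c = \sum_(I < 2) (compI I c)%:C * iu R I.
Proof.
rewrite big2; case: c => a b; rewrite /compI /iu /=.
by apply/eqP; rewrite eq_complex /=; apply/andP; split; apply/eqP; ring.
Qed.

Lemma genlin (R : rcfType) (A : R[i] -> R[i]) I (w : R[i]) :
  (forall a b, A (a + b) = A a + A b) -> (forall (r : R) c, A (r%:C * c) = r%:C * A c) ->
  \sum_(J < 2) compI I (A (iu R J)) * compI J w = compI I (A w).
Proof.
move=> hD hZ; rewrite {2}(decomp R w) !big2 hD !hZ compI_add !compI_scale.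
by rewrite !(mulrC (compI I _)).
Qed.

Lemma cjD (R : rcfType) e (a b : R[i]) : cj e (a + b) = cj e a + cj e b.
Proof. by case: e => //=; apply: rmorphD. Qed.
Lemma cjM (R : rcfType) e (a b : R[i]) : cj e (a * b) = cj e a * cj e b.
Proof. by case: e => //=; apply: rmorphM. Qed.
Lemma cjR (R : rcfType) e (r : R) : cj e r%:C = r%:C.
Proof. by case: e => //=; apply/eqP; rewrite eq_complex /= oppr0 !eqxx. Qed.
Lemma cj_sum (R : rcfType) e (T : Type) (r : seq T) (P : pred T) (F : T -> R[i]) :
  cj e (\sum_(t <- r | P t) F t) = \sum_(t <- r | P t) cj e (F t).
Proof. by case: e => //=; apply: rmorph_sum. Qed.
Lemma cj0 (R : rcfType) e : cj e (0 : R[i]) = 0.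
Proof. by case: e => //=; apply/eqP; rewrite eq_complex /= oppr0 !eqxx. Qed.

Definition Fwd (R : realType) (n : nat) (a : 'I_n -> bool -> R[i]) (j : nat) (J : 'I_2) :=
  \sum_(k < n) \sum_(e : bool) a k e * (xi R n ^+ (j * k) * cj e (iu R J)).

Definition Bv (R : realType) (n : nat) (V : 'I_n -> 'I_2 -> R[i]) (e : bool) (j : 'I_n) :=
  if e then (V j ord0 + ci * V j (lift ord0 ord0)) / 2%:R
  else (V j ord0 - ci * V j (lift ord0 ord0)) / 2%:R.

Definition Rec (R : realType) (n : nat) (V : 'I_n -> 'I_2 -> R[i]) (k : 'I_n) (e : bool) :=
  n%:R^-1 * \sum_(j < n) (xi R n)^-1 ^+ (j * k) * Bv R n V e j.

Arguments Fwd {R n}.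
Arguments Bv {R n}.
Arguments Rec {R n}.

Lemma iu0 (R : rcfType) : iu R ord0 = 1. Proof. by []. Qed.
Lemma iu1 (R : rcfType) : iu R (lift ord0 ord0) = ci. Proof. by []. Qed.
Lemma cjt1 (R : rcfType) : cj true (1 : R[i]) = 1.
Proof. by apply/eqP; rewrite eq_complex /= oppr0 !eqxx. Qed.
Lemma cjti (R : rcfType) : cj true (@ci R) = - ci.
Proof. exact: cji. Qed.

Lemma Fwd_split (R : realType) n (a : 'I_n -> bool -> R[i]) j J :
  Fwd a j J = (\sum_(k < n) a k false * xi R n ^+ (j * k)) * iu R J +
              (\sum_(k < n) a k true * xi R n ^+ (j * k)) * cj true (iu R J).
Proof.
rewrite /Fwd !mulr_suml -big_split /=; apply: eq_bigr => k _.
rewrite big_bool /= addrC; congr (_ + _); ring.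
Qed.

Lemma two_neq0 (R : rcfType) : (2%:R : R[i]) != 0.
Proof. by rewrite pnatr_eq0. Qed.

Lemma RecFwd (R : realType) n (n0 : (0 < n)%N) (a : 'I_n -> bool -> R[i]) k e :
  Rec (fun j J => Fwd a j J) k e = a k e.
Proof.
have hB : forall j : 'I_n, Bv (fun j J => Fwd a j J) e j = \sum_(k < n) xi R n ^+ (j * k) * a k e.
  move=> j; rewrite /Bv !Fwd_split iu0 iu1 cjt1 cjti !mulr1.
  set S0 := \sum_(k < n) _; set S1 := \sum_(k < n) _.
  have -> : \sum_(k < n) xi R n ^+ (j * k) * a k e = if e then S1 else S0.
    by case: e; apply: eq_bigr => ? _; rewrite mulrC.
  have h2 := two_neq0 R; have hi := ii R.
  case: e.
  - rewrite (_ : S0 + S1 + ci * (S0 * ci + S1 * - ci) = (S0 + S1) + (ci * ci) * (S0 - S1)); last by ring.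
    by rewrite hi; field.
  - rewrite (_ : S0 + S1 - ci * (S0 * ci + S1 * - ci) = (S0 + S1) - (ci * ci) * (S0 - S1)); last by ring.
    by rewrite hi; field.
rewrite /Rec (eq_bigr _ (fun j _ => congr1 (fun t => _ * t) (hB j))).
rewrite dft1 mulrA mulVf ?mul1r // pnatr_eq0 -lt0n //.
Qed.

Lemma FwdRec (R : realType) n (n0 : (0 < n)%N) (V : 'I_n -> 'I_2 -> R[i]) (j : 'I_n) J :
  Fwd (Rec V) j J = V j J.
Proof.
rewrite Fwd_split.
have hS : forall e, \sum_(k < n) Rec V k e * xi R n ^+ (j * k) = Bv V e j.
  move=> e; rewrite /Rec.
  under eq_bigr do rewrite mulrC mulrCA.
  rewrite -mulr_sumr dft2 mulrA mulVf ?mul1r // pnatr_eq0 -lt0n //.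
rewrite !hS /Bv.
have h2 := two_neq0 R; have hi := ii R.
have [->|->] : J = ord0 \/ J = lift ord0 ord0.
  by case: J => [[|[|]]] // ?; [left|right]; apply: val_inj.
- by rewrite iu0 cjt1; field.
- change (iu R (lift ord0 ord0)) with (@ci R); rewrite cjti.
  set a := V j ord0; set b := V j (lift ord0 ord0).
  rewrite (_ : (a - ci * b) / 2%:R * ci + (a + ci * b) / 2%:R * - ci = - (ci * ci) * b); last by field.
  by rewrite hi opprK mul1r.
Qed.
Lemma ci_neq (R : rcfType) : (@ci R) != - ci.
Proof.
apply/eqP=> h; have := congr1 (@complex.Im R) h.
rewrite raddfN.
change (complex.Im (@ci R)) with (1 : R).
move/eqP; rewrite -subr_eq0 opprK -mulr2n mulrn_eq0 oner_eq0 //.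
Qed.

Lemma phi_rhoX (R : realType) (n : nat) (gT : finGroupType) (G : {group gT}) (rho : gT)
  (phi : gT -> ps R[i] -> ps R[i]) (rho_in : rho \in G)
  (phi1 : forall f, phi 1%g f = f)
  (phiM : forall g h f, g \in G -> h \in G -> phi (g * h)%g f = phi g (phi h f))
  (phi_r : forall f, phi rho f = phi_rho n f) :
  forall k v j, phi (rho ^+ k)%g v j = xi R n ^+ (j * k) * v j.
Proof.
elim=> [|k IH] v j; first by rewrite expg0 phi1 muln0 expr0 mul1r.
rewrite expgSr phiM ?groupX // IH phi_r /phi_rho mulrA -exprD mulnS addnC.
by [].
Qed.

Arguments phi_rhoX {R n gT G rho phi}.

Definition dd (gT : finGroupType) (n : nat) (sigma rho : gT) (p : 'I_n * bool) : gT :=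
  (rho ^+ p.1 * sigma ^+ p.2)%g.

Arguments dd {gT n}.

Lemma phi_d (R : realType) (n : nat) (gT : finGroupType) (G : {group gT}) (sigma rho : gT)
  (phi : gT -> ps R[i] -> ps R[i]) (sigma_in : sigma \in G) (rho_in : rho \in G)
  (phi1 : forall f, phi 1%g f = f)
  (phiM : forall g h f, g \in G -> h \in G -> phi (g * h)%g f = phi g (phi h f))
  (phi_s : forall f, phi sigma f = phi_sigma f)
  (phi_r : forall f, phi rho f = phi_rho n f) :
  forall (p : 'I_n * bool) v j, phi (dd sigma rho p) v j = xi R n ^+ (j * p.1) * cj p.2 (v j).
Proof.
move=> [k e] v j; rewrite /dd /= phiM ?groupX //.
rewrite (phi_rhoX rho_in phi1 phiM phi_r).
by case: e; rewrite /= ?expg1 ?expg0 ?phi1 ?phi_s.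
Qed.

Arguments phi_d {R n gT G sigma rho phi}.

Lemma dd_inj (R : realType) (n : nat) (n0 : (0 < n)%N) (gT : finGroupType) (G : {group gT}) (sigma rho : gT)
  (phi : gT -> ps R[i] -> ps R[i]) (sigma_in : sigma \in G) (rho_in : rho \in G)
  (phi1 : forall f, phi 1%g f = f)
  (phiM : forall g h f, g \in G -> h \in G -> phi (g * h)%g f = phi g (phi h f))
  (phi_s : forall f, phi sigma f = phi_sigma f)
  (phi_r : forall f, phi rho f = phi_rho n f) :
  injective (@dd gT n sigma rho).
Proof.
have hd := phi_d sigma_in rho_in phi1 phiM phi_s phi_r.
move=> [k e] [k' e'] eq.
have h1 := hd (k, e) (fun _ => ci) 0%N; rewrite eq hd /= !mul0n !expr0 !mul1r in h1.
have h2 := hd (k, e) (fun _ => 1) 1%N; rewrite eq hd /= !mul1n in h2.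
have cin := ci_neq R.
have ee : e = e'.
  move: h1; case: (e); case: (e'); rewrite /cj ?cji // => h; exfalso; apply: (negP cin).
  - by apply/eqP.
  - by apply/eqP; rewrite -{1}h.
subst e'.
have c1 : cj e (1 : R[i]) = 1 by case: (e); [exact: cjt1|].
rewrite c1 !mulr1 in h2.
have kk : k' = k :> nat by apply: (xi_inj R n _ _ (ltn_ord k') (ltn_ord k) h2).
by congr (_, _); apply: val_inj.
Qed.
Arguments dd_inj {R n} n0 {gT G sigma rho phi}.

Lemma G_img (R : realType) (n : nat) (n0 : (0 < n)%N) (gT : finGroupType) (G : {group gT}) (sigma rho : gT)
  (phi : gT -> ps R[i] -> ps R[i]) (sigma_in : sigma \in G) (rho_in : rho \in G)
  (cardG : #|G| = (2 * n)%N)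
  (phi1 : forall f, phi 1%g f = f)
  (phiM : forall g h f, g \in G -> h \in G -> phi (g * h)%g f = phi g (phi h f))
  (phi_s : forall f, phi sigma f = phi_sigma f)
  (phi_r : forall f, phi rho f = phi_rho n f) :
  (G :=: (@dd gT n sigma rho) @: setT)%g.
Proof.
have inj := dd_inj n0 sigma_in rho_in phi1 phiM phi_s phi_r.
apply/eqP; rewrite eq_sym eqEcard; apply/andP; split.
  by apply/subsetP=> g /imsetP [[k e] _ ->]; rewrite /dd groupM ?groupX.
by rewrite card_imset // cardsT card_prod card_ord card_bool cardG mulnC.
Qed.
Arguments G_img {R n} n0 {gT G sigma rho phi}.

Lemma sumG (V : nmodType) (gT : finGroupType) (G : {group gT}) (n : nat) (sigma rho : gT)
  (inj : injective (@dd gT n sigma rho)) (Gi : (G :=: (@dd gT n sigma rho) @: setT)%g)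
  (F : gT -> V) :
  \sum_(g in G) F g = \sum_(k < n) \sum_(e : bool) F (dd sigma rho (k, e)).
Proof.
rewrite Gi big_imset /=; last by move=> x y _ _; apply: inj.
by rewrite pair_big /=; apply: eq_bigl => p; rewrite in_setT.
Qed.

Definition PhiF (R : realType) (n : nat) (gT : finGroupType) (G : {group gT})
  (F : gT -> nat -> R[i] -> R[i]) (x : gT -> ps R[i]) : M2mat R n :=
  fun I J i j s => compI I (if (j <= i + n * s)%N then
     \sum_(g in G) x g (i + n * s - j)%N * F g j (iu R J) else 0).

Arguments PhiF {R} n {gT} G F x.

Lemma add_sum (V W : nmodType) (f : V -> W) (T : Type) (r : seq T) (P : pred T) (E : T -> V) :
  (forall a b, f (a + b) = f a + f b) -> f 0 = 0 ->
  f (\sum_(t <- r | P t) E t) = \sum_(t <- r | P t) f (E t).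
Proof.
move=> hD h0; elim: r => [|t r IH]; first by rewrite !big_nil.
by rewrite !big_cons; case: (P t); rewrite ?hD IH.
Qed.

Lemma reindex_q (V : nmodType) (n s : nat) (H : nat -> V) :
  \sum_(j < n) \sum_(l < s.+1) H (j + n * (s - l))%N = \sum_(q < n * s.+1) H q.
Proof.
rewrite exchange_big /=.
rewrite (eq_bigr (fun l : 'I_s.+1 => \sum_(j < n) H (j + n * (s - l))%N)) //.
rewrite -(big_mkord xpredT (fun l => \sum_(j < n) H (j + n * (s - l))%N)).
rewrite -(big_mkord xpredT H).
elim: s => [|s IH].
  by rewrite big_nat1 muln1 big_mkord; apply: eq_bigr => j _; rewrite muln0 addn0.
rewrite big_nat_recl // subn0.
rewrite (eq_big_nat _ _ (F2 := fun l => \sum_(j < n) H (j + n * (s - l))%N)); last first.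
  by move=> l /andP [_ hl]; rewrite subSS.
rewrite IH [RHS](big_cat_nat _ (n := n * s.+1)) //=; last by rewrite leq_mul2l leqnSn orbT.
rewrite addrC; congr (_ + _).
rewrite -[X in \sum_(X <= _ < _) _](add0n (n * s.+1)) big_addn.
have -> : (n * s.+2 - n * s.+1 = n)%N by rewrite [X in (X - _)%N]mulnS addnK.
by rewrite big_mkord; apply: eq_bigr => j _; rewrite addnC.
Qed.

Lemma FPn (gT : finGroupType) (G : {group gT}) (K : Type) (n : nat) (F : gT -> nat -> K -> K)
  (FP : forall g m c, g \in G -> F g (m + n)%N c = F g m c) g m t c :
  g \in G -> F g (m + n * t)%N c = F g m c.
Proof.
move=> gG; elim: t => [|t IH]; first by rewrite muln0 addn0.
by rewrite mulnS addnCA addnC FP.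
Qed.

Arguments FPn {gT G K n F} FP {g m t c}.

Lemma mulPhi (R : realType) (n : nat) (gT : finGroupType) (G : {group gT})
 (phi : gT -> ps R[i] -> ps R[i]) (F : gT -> nat -> R[i] -> R[i])
 (hphi : forall g v m, g \in G -> phi g v m = F g m (v m))
 (FD : forall g m a b, g \in G -> F g m (a + b) = F g m a + F g m b)
 (FZ : forall g m (r : R) c, g \in G -> F g m (r%:C * c) = r%:C * F g m c)
 (FM : forall g a b c d, g \in G -> F g a c * F g b d = F g (a + b)%N (c * d))
 (FP : forall g m c, g \in G -> F g (m + n)%N c = F g m c)
 (FC : forall f h m c, f \in G -> h \in G -> F (f * h)%g m c = F f m (F h m c))
 (x y : gT -> ps R[i]) :
 PhiF n G F (skew_mul G phi x y) = M2_mul (PhiF n G F x) (PhiF n G F y).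
Proof.
have F0 : forall g m, g \in G -> F g m 0 = 0.
  by move=> g m gG; apply: (addrI (F g m 0)); rewrite -FD // !addr0.
have FS : forall g m (T : Type) (r : seq T) (Q : pred T) (E : T -> R[i]), g \in G ->
    F g m (\sum_(t <- r | Q t) E t) = \sum_(t <- r | Q t) F g m (E t).
  by move=> g m T r Q E gG; apply: add_sum; [move=> a b; apply: FD | apply: F0].
apply: functional_extensionality => I; apply: functional_extensionality => K.
apply: functional_extensionality => i; apply: functional_extensionality => k.
apply: functional_extensionality => s.
rewrite /M2_mul /ps_mul /PhiF.
set P := (i + n * s)%N.
pose Ax (j : 'I_n) (l : nat) (c : R[i]) :=
  if (j <= i + n * l)%N then \sum_(g in G) x g (i + n * l - j)%N * F g j c else 0.
pose Wy (j : 'I_n) (l : nat) :=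
  if (k <= j + n * (s - l))%N then \sum_(h in G) y h (j + n * (s - l) - k)%N * F h k (iu R K) else 0.
pose Gq (q : nat) := if (q <= P)%N then \sum_(f in G) x f (P - q)%N *
   F f q (if (k <= q)%N then \sum_(h in G) y h (q - k)%N * F h k (iu R K) else 0) else 0.
transitivity (compI I (\sum_(q < P.+1) Gq q)); last first.
  transitivity (\sum_(j < n) \sum_(l < s.+1) \sum_(J < 2) compI I (Ax j l (iu R J)) * compI J (Wy j l)).
    have hstep : forall (j : 'I_n) (l : 'I_s.+1),
      \sum_(J < 2) compI I (Ax j l (iu R J)) * compI J (Wy j l) = compI I (Gq (j + n * (s - l))%N).
      move=> j l; rewrite genlin; first last.
      - move=> r c; rewrite /Ax; case: ifP => _; last by rewrite mulr0.
        by rewrite mulr_sumr; apply: eq_bigr => g gG; rewrite FZ // mulrCA.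
      - move=> a b; rewrite /Ax; case: ifP => _; last by rewrite addr0.
        by rewrite -big_split; apply: eq_bigr => g gG; rewrite FD // mulrDr.
      congr (compI I _).
      have hl : (l <= s)%N by rewrite -ltnS ltn_ord.
      have e1 : (n * (s - l) = n * s - n * l)%N by rewrite mulnBr.
      have e2 : (n * l <= n * s)%N by rewrite leq_mul2l hl orbT.
      rewrite /Ax /Gq /P.
      case: (leqP j (i + n * l)) => h1.
        rewrite ifT; last by rewrite e1; move: e2 h1; move: (n * s)%N (n * l)%N => a b; lia.
        apply: eq_bigr => g gG; rewrite (FPn FP) //.
        congr (x g _ * _).
        by rewrite e1; move: e2 h1; move: (n * s)%N (n * l)%N => a b; lia.
      rewrite ifF //; apply/negbTE; rewrite -ltnNge.
      by rewrite e1; move: e2 h1; move: (n * s)%N (n * l)%N => a b; lia.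
    rewrite (eq_bigr _ (fun j _ => eq_bigr _ (fun l _ => hstep j l))).
    under eq_bigr do rewrite -compI_sum.
    rewrite -compI_sum; congr (compI I _).
    rewrite (@reindex_q _ n s Gq).
    have hP : (P.+1 <= n * s.+1)%N.
      by have := ltn_ord i; rewrite /P mulnS; lia.
    rewrite (big_ord_widen _ _ hP) big_mkcond /=; apply: eq_bigr => q _.
    by case: (ltnP q P.+1) => // h; rewrite /Gq leqNgt h.
  under eq_bigr => j _ do rewrite exchange_big.
  by rewrite exchange_big.
congr (compI I _).
case: (leqP k P) => hk; last first.
  symmetry; apply: big1 => q _; rewrite /Gq; case: ifP => // hq.
  rewrite ifF; last by apply/negbTE; rewrite -ltnNge; apply: (leq_ltn_trans hq).
  by apply: big1 => f fG; rewrite F0 // mulr0.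
have L1 : forall u, u \in G -> skew_mul G phi x y u (P - k)%N * F u k (iu R K) =
  \sum_(f in G) \sum_(l < (P - k).+1) x f l *
     F f (P - l)%N (y (f^-1 * u)%g (P - k - l)%N * F (f^-1 * u)%g k (iu R K)).
  move=> u uG; rewrite /skew_mul uG mulr_suml; apply: eq_bigr => f fG.
  rewrite /ps_mul mulr_suml; apply: eq_bigr => l _; rewrite hphi // -mulrA; congr (_ * _).
  have fuG : (f^-1 * u)%g \in G by rewrite groupM ?groupV.
  rewrite -[u in F u k _](mulKVg f u) FC // FM //; congr (F f _ _).
  by have := ltn_ord l; lia.
transitivity (\sum_(f in G) \sum_(h in G) \sum_(l < (P - k).+1) x f l *
     F f (P - l)%N (y h (P - k - l)%N * F h k (iu R K))).
  rewrite (eq_bigr _ L1) exchange_big /=; apply: eq_bigr => f fG.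
  rewrite (reindex_inj (mulgI f)) /=.
  apply: eq_big => [h|h hG]; first by rewrite groupMl.
  by rewrite mulKg.
rewrite (reindex_inj rev_ord_inj) /=.
have hw : ((P - k).+1 <= P.+1)%N by rewrite ltnS leq_subr.
under eq_bigr => f fG do rewrite exchange_big.
rewrite exchange_big /=.
rewrite (big_ord_widen _ (fun l => \sum_(i0 in G) \sum_(j in G)  x i0 l *
     F i0 (P - l)%N (y j (P - k - l)%N * F j k (iu R K))) hw) big_mkcond /=.
apply: eq_bigr => l _.
rewrite subSS /Gq leq_subr.
case: (ltnP l (P - k).+1) => hl.
  rewrite ifT; last by lia.
  have -> : (P - (P - l) = l)%N by have := ltn_ord l; lia.
  apply: eq_bigr => f fG; rewrite FS // mulr_sumr; apply: eq_bigr => h hG.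
  by congr (_ * F f _ (y h _ * _)); lia.
symmetry; apply: big1 => f fG; rewrite ifF; first by rewrite F0 // mulr0.
by apply/negbTE; rewrite -ltnNge; have := ltn_ord l; lia.
Qed.

Lemma ps_mul_const (K : pzRingType) (c : K) (f : ps K) m : ps_mul (ps_const c) f m = c * f m.
Proof.
rewrite /ps_mul big_ord_recl /= subn0 big1 ?addr0 //.
by move=> l _; rewrite /ps_const /= mul0r.
Qed.

Theorem proposition6p3 (R : realType) (n : nat) (n_gt0 : (0 < n)%N)
  (gT : finGroupType) (G : {group gT}) (sigma rho : gT)
  (sigma_in : sigma \in G) (rho_in : rho \in G)
  (genG : G :=: <<[set sigma; rho]>>%g)
  (sigma2 : (sigma ^+ 2 = 1)%g) (rhon : (rho ^+ n = 1)%g)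
  (conj_rho : (sigma * rho * sigma^-1 = rho^-1)%g)
  (cardG : #|G| = (2 * n)%N)
  (phi : gT -> ps R[i] -> ps R[i])
  (phi1 : forall f, phi 1%g f = f)
  (phiM : forall g h f, g \in G -> h \in G -> phi (g * h)%g f = phi g (phi h f))
  (phi_s : forall f, phi sigma f = phi_sigma f)
  (phi_r : forall f, phi rho f = phi_rho n f) :
  exists Phi : (gT -> ps R[i]) -> M2mat R n,
    (
        (forall x, skew_mem G x -> M2Hn_mem (Phi x)) /\
        (forall M, M2Hn_mem M -> exists2 x, skew_mem G x & Phi x = M) /\
        (forall x y, skew_mem G x -> skew_mem G y -> Phi x = Phi y -> x = y) /\
        (forall x y, skew_mem G x -> skew_mem G y ->
           Phi (skew_add x y) = M2_add (Phi x) (Phi y)) /\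
        (forall x y, skew_mem G x -> skew_mem G y ->
           Phi (skew_mul G phi x y) = M2_mul (Phi x) (Phi y)) /\
        Phi (@skew_one gT R[i]) = @M2_one R n /\
        (
         forall (r : R) x, skew_mem G x ->
           Phi (@skew_scale gT R[i] (r%:C)%C x) = M2_scale r (Phi x))).
Proof.
have inj := dd_inj n_gt0 sigma_in rho_in phi1 phiM phi_s phi_r.
have Gi := G_img n_gt0 sigma_in rho_in cardG phi1 phiM phi_s phi_r.
have hd := phi_d sigma_in rho_in phi1 phiM phi_s phi_r.
have ddG : forall p : 'I_n * bool, dd sigma rho p \in G.
  by move=> [k e]; rewrite /dd groupM // groupX.
have Gdd : forall g, g \in G -> exists p : 'I_n * bool, g = dd sigma rho p.
  move=> g gG; have : g \in (@dd gT n sigma rho) @: setT by rewrite -Gi.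
  by case/imsetP=> p _ ->; exists p.
pose F (g : gT) (m : nat) (c : R[i]) := phi g (fun t => if t == m then c else 0) m.
have Fd : forall (p : 'I_n * bool) m c, F (dd sigma rho p) m c = xi R n ^+ (m * p.1) * cj p.2 c.
  by move=> p m c; rewrite /F hd eqxx.
have hphi : forall g v m, g \in G -> phi g v m = F g m (v m).
  by move=> g v m /Gdd [p ->]; rewrite Fd hd.
have FD : forall g m a b, g \in G -> F g m (a + b) = F g m a + F g m b.
  by move=> g m a b /Gdd [p ->]; rewrite !Fd cjD mulrDr.
have FZ : forall g m (r : R) c, g \in G -> F g m (r%:C * c) = r%:C * F g m c.
  by move=> g m r c /Gdd [p ->]; rewrite !Fd cjM cjR mulrCA.
have FM : forall g a b c d, g \in G -> F g a c * F g b d = F g (a + b)%N (c * d).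
  by move=> g a b c d /Gdd [p ->]; rewrite !Fd cjM mulnDl exprD; ring.
have FP : forall g m c, g \in G -> F g (m + n)%N c = F g m c.
  move=> g m c /Gdd [p ->]; rewrite !Fd mulnDl exprD [xi R n ^+ (n * _)]exprM.
  by rewrite (xin1 R n n_gt0) expr1n mulr1.
have FC : forall f h m c, f \in G -> h \in G -> F (f * h)%g m c = F f m (F h m c).
  by move=> f h m c fG hG; rewrite {1}/F phiM // hphi //.
have hsum : forall (V : nmodType) (H : gT -> V),
   \sum_(g in G) H g = \sum_(k < n) \sum_(e : bool) H (dd sigma rho (k, e)).
  by move=> V H; apply: (@sumG V gT G n sigma rho inj Gi).
have PhiFwd : forall (x : gT -> ps R[i]) (I J : 'I_2) (i j : 'I_n) (s : nat), (j <= i + n * s)%N ->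
   PhiF n G F x I J i j s =
   compI I (Fwd (fun (k : 'I_n) (e : bool) => x (dd sigma rho (k, e)) (i + n * s - j)%N) j J).
  move=> x I J i j s hj; rewrite /PhiF hj hsum /Fwd; congr (compI I _).
  by apply: eq_bigr => k _; apply: eq_bigr => e _; rewrite Fd.
pose Vm (M : M2mat R n) (m : nat) (j : 'I_n) (J : 'I_2) : R[i] :=
  \sum_(I < 2) (M I J (Ordinal (ltn_pmod (m + j) n_gt0)) j ((m + j) %/ n)%N)%:C * iu R I.
pose Psi (M : M2mat R n) (g : gT) (m : nat) : R[i] :=
  \sum_(p : 'I_n * bool | dd sigma rho p == g) Rec (Vm M m) p.1 p.2.
have PsiE : forall M (k : 'I_n) e m, Psi M (dd sigma rho (k, e)) m = Rec (Vm M m) k e.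
  move=> M k e m; rewrite /Psi (eq_bigl (fun p => p == (k, e))) ?big_pred1_eq //.
  by move=> p; rewrite /= (inj_eq inj).
have VmPhi : forall x m, Vm (PhiF n G F x) m =
    (fun j J => Fwd (fun (k : 'I_n) (e : bool) => x (dd sigma rho (k, e)) m) j J).
  move=> x m; apply: functional_extensionality => j; apply: functional_extensionality => J.
  rewrite /Vm.
  set i' := Ordinal _.
  have hi' : (i' + n * ((m + j) %/ n) = m + j)%N.
    by rewrite /i' /= mulnC addnC -divn_eq.
  have hj : (j <= i' + n * ((m + j) %/ n))%N by rewrite hi' leq_addl.
  rewrite (eq_bigr (fun I => (compI I (Fwd (fun (k : 'I_n) (e : bool) => x (dd sigma rho (k, e)) m) j J))%:C * iu R I)).
    by rewrite -decomp.
  by move=> I _; rewrite PhiFwd // hi' addnK.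
exists (PhiF n G F); split; last split; last split; last split; last split; last split.
- move=> x _ I J i j ij; rewrite /PhiF ifF ?compI0 //.
  by apply/negbTE; rewrite -ltnNge muln0 addn0.
- move=> M hM; exists (Psi M).
    move=> g gN; apply: functional_extensionality => m; rewrite /Psi big_pred0 //.
    by move=> p; apply/negbTE; apply/negP => /eqP e; move: gN; rewrite -e ddG.
  apply: functional_extensionality => I; apply: functional_extensionality => J.
  apply: functional_extensionality => i; apply: functional_extensionality => j.
  apply: functional_extensionality => s.
  case: (leqP j (i + n * s)) => hj; last first.
    rewrite /PhiF leqNgt hj /= compI0.
    have s0 : s = 0%N.
      case: s hj => // s; have := ltn_ord j; rewrite mulnS; lia.
    subst s; rewrite hM //; move: hj; rewrite muln0 addn0 //.
  rewrite PhiFwd //.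
  have -> : (fun (k : 'I_n) (e : bool) => Psi M (dd sigma rho (k, e)) (i + n * s - j)%N) =
            Rec (Vm M (i + n * s - j)%N).
    by apply: functional_extensionality => k; apply: functional_extensionality => e; rewrite PsiE.
  rewrite FwdRec // /Vm.
  have hm : (i + n * s - j + j = i + n * s)%N by rewrite subnK.
  have -> : Ordinal (ltn_pmod (i + n * s - j + j) n_gt0) = i.
    apply: val_inj => /=; rewrite hm mulnC addnC modnMDl modn_small //.
  have -> : ((i + n * s - j + j) %/ n = s)%N.
    by rewrite hm mulnC addnC divnMDl // divn_small ?addn0.
  rewrite compI_sum (eq_bigr (fun I' => M I' J i j s * (I == I')%:R)); last first.
    by move=> I' _; rewrite compI_scale compI_iu.
  rewrite (bigD1 I) //= eqxx mulr1 big1 ?addr0 //.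
  by move=> I' /negbTE; rewrite eq_sym => ->; rewrite mulr0.
- move=> x y hx hy hxy; apply: functional_extensionality => g.
  case gG: (g \in G); last by rewrite hx ?hy ?gG.
  have [[k e] ->] := Gdd g gG.
  apply: functional_extensionality => m.
  rewrite -(RecFwd R n n_gt0 (fun (k : 'I_n) (e : bool) => x (dd sigma rho (k, e)) m) k e).
  rewrite -(RecFwd R n n_gt0 (fun (k : 'I_n) (e : bool) => y (dd sigma rho (k, e)) m) k e).
  by rewrite -!VmPhi hxy.
- move=> x y _ _.
  apply: functional_extensionality => I; apply: functional_extensionality => J.
  apply: functional_extensionality => i; apply: functional_extensionality => j.
  apply: functional_extensionality => s.
  rewrite /PhiF /M2_add /ps_add; case: (j <= i + n * s)%N; last by rewrite compI0 addr0.
  rewrite -compI_add -big_split; congr (compI I _); apply: eq_bigr => g _.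
  by rewrite /skew_add /ps_add mulrDl.
- move=> x y _ _; apply: mulPhi => //.
- apply: functional_extensionality => I; apply: functional_extensionality => J.
  apply: functional_extensionality => i; apply: functional_extensionality => j.
  apply: functional_extensionality => s.
  rewrite /PhiF /M2_one /skew_one.
  case hj: (j <= i + n * s)%N; last first.
    rewrite compI0; have -> : (i == j) = false.
      by apply/negbTE; apply/eqP => e; move: hj; rewrite e leq_addr.
    by rewrite andbF.
  rewrite (bigD1 1%g) ?group1 //= eqxx big1 ?addr0; last first.
    by move=> g /andP [_ /negbTE ->]; rewrite /ps_zero mul0r.
  have -> : F 1%g j (iu R J) = iu R J by rewrite /F phi1 eqxx.
  case: (eqVneq s 0%N) => [s0|sn0].
    subst s; move: hj; rewrite muln0 addn0 => hj.
    rewrite /ps_one subn_eq0.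
    case: (eqVneq (i : nat) j) => [e|ne].
      rewrite e leqnn mul1r compI_iu.
      have -> : i = j by apply: val_inj.
      by rewrite eqxx andbT; case: (I == J).
    have -> : (i <= j)%N = false by apply/negbTE; rewrite -ltnNge ltn_neqAle eq_sym ne hj.
    rewrite mul0r compI0.
    have -> : (i == j) = false by apply/negbTE; apply/eqP=> e; rewrite e eqxx in ne.
    by rewrite andbF.
  rewrite /ps_one.
  have -> : (i + n * s - j == 0)%N = false.
    apply/negbTE; rewrite subn_eq0 -ltnNge.
    have := ltn_ord j; case: s sn0 {hj} => // s _; rewrite mulnS; lia.
  rewrite mul0r compI0.
  by case: (_ && _); rewrite /ps_zero // (negbTE sn0).
- move=> r x _.
  apply: functional_extensionality => I; apply: functional_extensionality => J.
  apply: functional_extensionality => i; apply: functional_extensionality => j.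
  apply: functional_extensionality => s.
  rewrite /PhiF /M2_scale ps_mul_const; case: (j <= i + n * s)%N; last by rewrite compI0 mulr0.
  rewrite -compI_scale mulr_sumr; congr (compI I _); apply: eq_bigr => g _.
  by rewrite /skew_scale ps_mul_const mulrA.
Qed.
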